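(* Let $X$ be a real topological vector space and let $f:X\times X\to\mathbb{R}$ be a bifunction such that for each $x\in X$ the function $-f(x,\cdot)$ is semi-strictly quasi-convex, and $f(x,x)=0$ for all $x\in X$. If $f$ has the star finite intersection property (fip$^*$) on $X$, then $f$ is quasi-monotone on $X$.
   Context: A function $h:X\to\mathbb{R}\cup\{+\infty\}$ is quasi-convex if every sublevel set $\{x\in X: h(x)\leq\lambda\}$, $\lambda\in\mathbb{R}$, is convex; it is semi-strictly quasi-convex if it is quasi-convex and for all $x,y\in X$ with $h(x)\neq h(y)$ one has $h(tx+(1-t)y)<\max\{h(x),h(y)\}$ for all $t\in\,]0,1[$. The bifunction $f$ has the fip$^*$ on a convex set $C$ if for every finite non-empty subset $A$ of $C$ there exists $x\in\operatorname{co}(A)$ with $\max_{a\in A}f(a,x)\leq 0$. The bifunction $f$ is quasi-monotone on $C$ if for all $x,y\in C$, $f(x,y)>0$ implies $f(y,x)\leq 0$. *)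

(* Defs.v *)
From HB Require Import structures.
From mathcomp Require Import all_boot all_order all_algebra.
From mathcomp Require Import all_classical all_reals all_analysis.
Set Implicit Arguments. Unset Strict Implicit. Unset Printing Implicit Defensive.
Import Order.TTheory GRing.Theory Num.Theory.
Local Open Scope ring_scope.

Definition quasi_convex (R : realType) (X : lmodType R) (h : X -> R) : Prop :=
  forall lam : R, forall x y : X, forall t : R, 0 <= t <= 1 ->
    h x <= lam -> h y <= lam -> h (t *: x + (1 - t) *: y) <= lam.

Definition semistrictly_quasi_convex (R : realType) (X : lmodType R)
    (h : X -> R) : Prop :=
  quasi_convex h /\
  forall x y : X, h x != h y -> forall t : R, 0 < t < 1 ->
    h (t *: x + (1 - t) *: y) < Num.max (h x) (h y).

Definition in_conv_hull (R : realType) (X : lmodType R) (A : seq X) (x : X)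
    : Prop :=
  exists w : X -> R, (forall a, a \in A -> 0 <= w a) /\
    \sum_(a <- undup A) w a = 1 /\ x = \sum_(a <- undup A) w a *: a.

Definition fip_star (R : realType) (X : lmodType R) (f : X -> X -> R) : Prop :=
  forall A : seq X, A != [::] ->
    exists2 x : X, in_conv_hull A x & forall a, a \in A -> f a x <= 0.

Definition quasi_monotone (R : realType) (X : lmodType R) (f : X -> X -> R)
    : Prop :=
  forall x y : X, 0 < f x y -> f y x <= 0.

(* Main.v *)
Require Import Defs.
From HB Require Import structures.
From mathcomp Require Import all_boot all_order all_algebra.
From mathcomp Require Import all_classical all_reals all_analysis.
Import Order.TTheory GRing.Theory Num.Theory.
Local Open Scope ring_scope.

Theorem proposition3p2 (R : realType) (X : topologicalLmodType R)
    (f : X -> X -> R)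
    (hsqc : forall x : X, semistrictly_quasi_convex (fun y : X => - f x y))
    (hdiag : forall x : X, f x x = 0)
    (hfip : fip_star f) :
  quasi_monotone f.
Proof.
move=> x y fxy; rewrite leNgt; apply/negP => fyx.
have nxy : x != y by apply/eqP => exy; move: fxy; rewrite exy hdiag ltxx.
have [z [w [w0 [w1 ez]]] hz] := hfip [:: x; y] isT.
have ud : undup [:: x; y] = [:: x; y].
  by rewrite /= !inE (negbTE nxy).
rewrite ud !big_cons !big_nil !addr0 in w1 ez.
have wx0 : 0 <= w x by apply: w0; rewrite inE eqxx.
have wy0 : 0 <= w y by apply: w0; rewrite !inE eqxx orbT.
have fxz := hz x (mem_head _ _).
have fyz : f y z <= 0 by apply: hz; rewrite !inE eqxx orbT.
have wyE : w y = 1 - w x by rewrite -w1 addrC addKr.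
have [wxe|wxn] := eqVneq (w x) 0.
  move: ez; rewrite wyE wxe scale0r add0r subr0 scale1r => ez.
  by move: fxz; rewrite ez leNgt fxy.
have [wxe1|wxn1] := eqVneq (w x) 1.
  move: ez; rewrite wyE wxe1 subrr scale0r scale1r addr0 => ez.
  by move: fyz; rewrite ez leNgt fyx.
have [_ hs] := hsqc x.
have hne : - f x x != - f x y.
  by rewrite hdiag oppr0 eq_sym oppr_eq0 gt_eqF.
have ht : 0 < w x < 1.
  rewrite lt_def wxn wx0 /= lt_def eq_sym wxn1 /=.
  by rewrite -subr_ge0 -wyE.
have := hs x y hne (w x) ht.
rewrite -wyE -ez hdiag oppr0.
have -> : Num.max 0 (- f x y) = 0 by apply/max_idPl; rewrite oppr_le0 ltW.
by rewrite oppr_lt0 ltNge fxz.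
Qed.
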